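(* Let $a,b\in(0,1]$ and $F(x)=F(a,b;a+b;x)$ for $|x|<1$. Then $1/F(x)$ is concave on $(0,1)$. In particular, $$F\Big(\frac{x+y}{2}\Big)\le\frac{2F(x)F(y)}{F(x)+F(y)}$$ for all $x,y\in(0,1)$, with equality if and only if $x=y$.
   Context: $F(a,b;c;x)=\sum_{n=0}^\infty\frac{(a,n)(b,n)}{(c,n)\,n!}x^n$ for $|x|<1$ is the Gaussian hypergeometric function, where $(a,0)=1$ and $(a,n)=a(a+1)\cdots(a+n-1)$ for $n\ge1$. *)

(* Defs.v *)
From Stdlib Require Import Reals.
From Coquelicot Require Import Coquelicot.
Open Scope R_scope.

Fixpoint poch (a : R) (n : nat) : R :=
  match n with
  | O => 1
  | S k => poch a k * (a + INR k)
  end.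

(* Gaussian hypergeometric function F(a,b;c;x) = sum_n (a,n)(b,n)/((c,n) n!) x^n,
   meaningful for |x| < 1 (there the series converges when c is not a
   non-positive integer). *)
Definition hypergeom (a b c x : R) : R :=
  Series (fun n => poch a n * poch b n / (poch c n * INR (Factorial.fact n)) * x ^ n).

Definition concave_on (f : R -> R) (l u : R) : Prop :=
  forall x y t, l < x < u -> l < y < u -> 0 <= t <= 1 ->
    t * f x + (1 - t) * f y <= f (t * x + (1 - t) * y).

(* Main.v *)
Require Import Defs.
From Stdlib Require Import Reals Lra Lia Psatz.
From Coquelicot Require Import Coquelicot.
Open Scope R_scope.

Definition cf (a b : R) (n : nat) : R :=
  poch a n * poch b n / (poch (a + b) n * INR (Factorial.fact n)).
Definition rho (a b : R) (n : nat) : R :=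
  (a + INR n) * (b + INR n) / ((a + b + INR n) * (INR n + 1)).

Lemma poch_pos c n : 0 < c -> 0 < poch c n.
Proof.
  intros Hc; induction n as [|n IH]; simpl; [lra|].
  apply Rmult_lt_0_compat; auto. pose proof (pos_INR n); lra.
Qed.

Lemma fact_pos n : 0 < INR (Factorial.fact n).
Proof. apply lt_0_INR. apply Factorial.lt_O_fact. Qed.

Lemma cf0 a b : cf a b 0 = 1.
Proof. unfold cf; simpl. field. Qed.

Lemma cf_S a b n : 0 < a -> 0 < b -> cf a b (S n) = cf a b n * rho a b n.
Proof.
  intros Ha Hb. unfold cf, rho. simpl poch.
  change (Factorial.fact (S n)) with (S n * Factorial.fact n)%nat.
  rewrite mult_INR, S_INR.
  pose proof (poch_pos (a+b) n ltac:(lra)). pose proof (fact_pos n).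
  pose proof (pos_INR n).
  field. repeat split; lra.
Qed.

Lemma rho_pos a b n : 0 < a -> 0 < b -> 0 < rho a b n.
Proof.
  intros Ha Hb; unfold rho; pose proof (pos_INR n).
  apply Rdiv_lt_0_compat; apply Rmult_lt_0_compat; lra.
Qed.

Lemma rho_le1 a b n : 0 < a <= 1 -> 0 < b <= 1 -> rho a b n <= 1.
Proof.
  intros Ha Hb; unfold rho; pose proof (pos_INR n).
  apply Rcomplements.Rle_div_l. apply Rmult_lt_0_compat; lra.
  nra.
Qed.

Lemma rho_diff a b n : 0 < a -> 0 < b ->
  rho a b (S n) - rho a b n =
  ((INR n + (a+b) - a*b) * (INR n + (a+b) + 1) - a*b*(INR n + 1)) /
  ((INR n + a + b) * (INR n + 1) * (INR n + 1 + a + b) * (INR n + 2)).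
Proof.
  intros Ha Hb; unfold rho; rewrite S_INR; pose proof (pos_INR n).
  field. repeat split; lra.
Qed.

Lemma rho_mono a b n : 0 < a <= 1 -> 0 < b <= 1 -> rho a b n <= rho a b (S n).
Proof.
  intros Ha Hb. cut (0 <= rho a b (S n) - rho a b n); [lra|].
  rewrite rho_diff by lra. pose proof (pos_INR n).
  apply Rdiv_le_0_compat.
  - assert (a*b <= a) by nra. assert (a*b <= b) by nra.
    assert (0 <= a*b) by nra.
    assert (a*b <= INR n + (a+b) - a*b) by lra.
    assert (INR n + 1 <= INR n + (a+b) + 1) by lra.
    nra.
  - repeat apply Rmult_lt_0_compat; lra.
Qed.

Lemma rho_strict a b : 0 < a <= 1 -> 0 < b <= 1 -> rho a b 0 < rho a b 1.
Proof.
  intros Ha Hb. cut (0 < rho a b 1 - rho a b 0); [lra|].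
  rewrite rho_diff by lra. simpl INR.
  apply Rdiv_lt_0_compat.
  - assert (a*b <= a) by nra. assert (a*b <= b) by nra.
    assert (0 < a*b) by nra. nra.
  - repeat apply Rmult_lt_0_compat; lra.
Qed.

Lemma rho_mono_le a b m n : 0 < a <= 1 -> 0 < b <= 1 -> (m <= n)%nat ->
  rho a b m <= rho a b n.
Proof.
  intros Ha Hb H; induction H; [lra|].
  pose proof (rho_mono a b m0 Ha Hb); lra.
Qed.

Lemma cf_pos a b n : 0 < a -> 0 < b -> 0 < cf a b n.
Proof.
  intros Ha Hb; induction n; [rewrite cf0; lra|].
  rewrite cf_S by lra. apply Rmult_lt_0_compat; auto. apply rho_pos; lra.
Qed.

Lemma cf_le1 a b n : 0 < a <= 1 -> 0 < b <= 1 -> cf a b n <= 1.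
Proof.
  intros Ha Hb; induction n; [rewrite cf0; lra|].
  rewrite cf_S by lra. pose proof (rho_le1 a b n Ha Hb).
  pose proof (rho_pos a b n ltac:(lra) ltac:(lra)).
  pose proof (cf_pos a b n ltac:(lra) ltac:(lra)). nra.
Qed.

Fixpoint btab (a b : R) (n : nat) : nat -> R :=
  match n with
  | O => fun _ => 0
  | S m => fun k => if Nat.leb k m then btab a b m k
           else cf a b (S m) - sum_f_R0 (fun j => btab a b m j * cf a b (S m - j)) m
  end.
Definition bc a b n := btab a b n n.

Lemma btab_S a b m k : btab a b (S m) k = if Nat.leb k m then btab a b m k
           else cf a b (S m) - sum_f_R0 (fun j => btab a b m j * cf a b (S m - j)) m.
Proof. reflexivity. Qed.

Lemma btab_stable a b n k : (k <= n)%nat -> btab a b n k = bc a b k.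
Proof.
  induction n as [|n IH]; intros H.
  - assert (k = 0%nat) by lia; subst; reflexivity.
  - destruct (Nat.eq_dec k (S n)) as [->|Hne]; [reflexivity|].
    simpl. assert (Nat.leb k n = true) as -> by (apply Nat.leb_le; lia).
    apply IH; lia.
Qed.

Lemma bc0 a b : bc a b 0 = 0.
Proof. reflexivity. Qed.

Lemma bc_rec a b m : bc a b (S m) =
  cf a b (S m) - sum_f_R0 (fun j => bc a b j * cf a b (S m - j)) m.
Proof.
  unfold bc at 1. rewrite btab_S.
  assert (Nat.leb (S m) m = false) as -> by (apply Nat.leb_gt; lia). f_equal.
  apply sum_eq; intros i Hi. rewrite btab_stable; auto.
Qed.

Lemma conv a b n : (1 <= n)%nat ->
  sum_f_R0 (fun k => bc a b k * cf a b (n - k)) n = cf a b n.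
Proof.
  intros H. destruct n as [|m]; [lia|]. rewrite tech5.
  rewrite Nat.sub_diag, cf0, (bc_rec a b m). ring.
Qed.

Lemma sum_nonneg_le (f : nat -> R) N : (forall k, (k <= N)%nat -> 0 <= f k) ->
  0 <= sum_f_R0 f N.
Proof.
  induction N as [|N IH]; intros H; simpl.
  - apply H; lia.
  - pose proof (H (S N) (le_n _)). assert (0 <= sum_f_R0 f N) by (apply IH; intros; apply H; lia). lra.
Qed.

Lemma bc_step a b n : 0 < a -> 0 < b -> (1 <= n)%nat ->
  bc a b (S n) = sum_f_R0 (fun k => bc a b k * cf a b (n - k) * (rho a b n - rho a b (n - k))) n.
Proof.
  intros Ha Hb H. rewrite bc_rec, cf_S by lra. rewrite <- (conv a b n H) at 1.
  rewrite (Rmult_comm _ (rho a b n)), scal_sum.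
  rewrite <- minus_sum. apply sum_eq. intros i Hi.
  replace (S n - i)%nat with (S (n - i)) by lia. rewrite cf_S by lra. ring.
Qed.

Lemma bc_nonneg a b n : 0 < a <= 1 -> 0 < b <= 1 -> 0 <= bc a b n.
Proof.
  intros Ha Hb.
  assert (forall N k, (k <= N)%nat -> 0 <= bc a b k); [|apply (H n); lia].
  induction N as [|N IH]; intros k Hk.
  - assert (k = 0%nat) by lia; subst; rewrite bc0; lra.
  - destruct (Nat.eq_dec k (S N)) as [->|Hne]; [|apply IH; lia].
    destruct N as [|N].
    + rewrite bc_rec. simpl sum_f_R0. rewrite bc0, Rmult_0_l, Rminus_0_r. left; apply cf_pos; lra.
    + rewrite bc_step by (lra || lia). apply sum_nonneg_le. intros k Hk'.
      apply Rmult_le_pos; [apply Rmult_le_pos|].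
      * apply IH; lia.
      * left; apply cf_pos; lra.
      * pose proof (rho_mono_le a b (S N - k) (S N) Ha Hb ltac:(lia)). lra.
Qed.

Lemma bc_le_cf a b n : 0 < a <= 1 -> 0 < b <= 1 -> bc a b n <= cf a b n.
Proof.
  intros Ha Hb. destruct n as [|m].
  - rewrite bc0, cf0; lra.
  - rewrite bc_rec. cut (0 <= sum_f_R0 (fun j => bc a b j * cf a b (S m - j)) m); [lra|].
    apply sum_nonneg_le; intros k _. apply Rmult_le_pos; [apply bc_nonneg; auto|left; apply cf_pos; lra].
Qed.

Lemma bc2_pos a b : 0 < a <= 1 -> 0 < b <= 1 -> 0 < bc a b 2.
Proof.
  intros Ha Hb. rewrite bc_rec. simpl sum_f_R0. rewrite bc0.
  rewrite (bc_rec a b 0). simpl sum_f_R0. rewrite bc0.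
  simpl Nat.sub. rewrite (cf_S a b 1), (cf_S a b 0), cf0 by lra.
  pose proof (rho_strict a b Ha Hb). pose proof (rho_pos a b 0 ltac:(lra) ltac:(lra)).
  nra.
Qed.

Lemma ex_dom (u : nat -> R) x : 0 <= x < 1 -> (forall n, Rabs (u n) <= x ^ n) ->
  ex_series u /\ ex_series (fun n => Rabs (u n)).
Proof.
  intros Hx H. assert (Hg : ex_series (fun n => x ^ n)).
  { exists (/ (1 - x)). apply is_series_geom. rewrite Rabs_pos_eq; lra. }
  split; apply (@ex_series_le R_AbsRing R_CompleteNormedModule _ (fun n => x ^ n)); auto; intro n.
  - change (norm (u n)) with (Rabs (u n)); auto.
  - change (norm (Rabs (u n))) with (Rabs (Rabs (u n))); rewrite Rabs_Rabsolu; auto.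
Qed.

Lemma Series_nonneg (u : nat -> R) : (forall n, 0 <= u n) -> ex_series u -> 0 <= Series u.
Proof.
  intros H He. assert (Series (fun n => 0 * u n) = 0) by (rewrite Series_scal_l; ring).
  rewrite <- H0. apply Series_le; auto. intro n; split; [lra|]. rewrite Rmult_0_l; auto.
Qed.


Definition Fs a b x := Series (fun n => cf a b n * x ^ n).
Definition Bs a b x := Series (fun n => bc a b n * x ^ n).

Lemma Fs_eq a b x : hypergeom a b (a + b) x = Fs a b x.
Proof. reflexivity. Qed.

Lemma alpha_ex a b x : 0 < a <= 1 -> 0 < b <= 1 -> 0 <= x < 1 ->
  ex_series (fun n => cf a b n * x ^ n) /\ ex_series (fun n => Rabs (cf a b n * x ^ n)).
Proof.
  intros Ha Hb Hx. apply (ex_dom _ x); auto. intro n.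
  pose proof (cf_pos a b n ltac:(lra) ltac:(lra)). pose proof (cf_le1 a b n Ha Hb).
  pose proof (pow_le x n ltac:(lra)).
  rewrite Rabs_pos_eq by nra. nra.
Qed.

Lemma beta_ex a b x : 0 < a <= 1 -> 0 < b <= 1 -> 0 <= x < 1 ->
  ex_series (fun n => bc a b n * x ^ n) /\ ex_series (fun n => Rabs (bc a b n * x ^ n)).
Proof.
  intros Ha Hb Hx. apply (ex_dom _ x); auto. intro n.
  pose proof (bc_nonneg a b n Ha Hb). pose proof (bc_le_cf a b n Ha Hb). pose proof (cf_le1 a b n Ha Hb).
  pose proof (pow_le x n ltac:(lra)).
  rewrite Rabs_pos_eq by nra. nra.
Qed.

Lemma Fs_ge1 a b x : 0 < a <= 1 -> 0 < b <= 1 -> 0 <= x < 1 -> 1 <= Fs a b x.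
Proof.
  intros Ha Hb Hx. destruct (alpha_ex a b x Ha Hb Hx) as [He _]. unfold Fs.
  rewrite Series_incr_1 by auto. rewrite cf0, pow_O.
  assert (0 <= Series (fun k => cf a b (S k) * x ^ S k)); [|lra].
  apply Series_nonneg.
  - intro n. pose proof (cf_pos a b (S n) ltac:(lra) ltac:(lra)). pose proof (pow_le x (S n) ltac:(lra)). nra.
  - apply (ex_series_incr_1 (fun n => cf a b n * x ^ n)); auto.
Qed.

Lemma inv_Fs a b x : 0 < a <= 1 -> 0 < b <= 1 -> 0 <= x < 1 -> / Fs a b x = 1 - Bs a b x.
Proof.
  intros Ha Hb Hx. destruct (alpha_ex a b x Ha Hb Hx) as [Ha1 Ha2].
  destruct (beta_ex a b x Ha Hb Hx) as [Hb1 Hb2].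
  pose proof (is_series_mult _ _ _ _ (Series_correct _ Hb1) (Series_correct _ Ha1) Hb2 Ha2) as HM.
  set (c := fun n => sum_f_R0 (fun k => bc a b k * x ^ k * (cf a b (n - k) * x ^ (n - k))) n) in HM.
  assert (Hc : forall n, c (S n) = cf a b (S n) * x ^ S n).
  { intro n. unfold c. rewrite <- (conv a b (S n)) by lia.
    rewrite Rmult_comm, scal_sum. apply sum_eq. intros i Hi.
    replace (x ^ S n) with (x ^ i * x ^ (S n - i)) by (rewrite <- pow_add; f_equal; lia). ring. }
  assert (Hc0 : c 0%nat = 0). { unfold c. simpl. rewrite bc0. ring. }
  assert (HS : Series c = Fs a b x - 1).
  { rewrite Series_incr_1 by (eexists; eauto). rewrite Hc0.
    unfold Fs. rewrite (Series_incr_1 (fun n => cf a b n * x ^ n)) by auto.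
    rewrite cf0, pow_O. erewrite Series_ext; [|intro n; apply Hc]. ring. }
  apply is_series_unique in HM. fold (Bs a b x) in HM. fold (Fs a b x) in HM.
  pose proof (Fs_ge1 a b x Ha Hb Hx).
  rewrite HS in HM. field_simplify_eq; [|lra]. lra.
Qed.

Lemma pow_convex x y t n : 0 <= x -> 0 <= y -> 0 <= t <= 1 ->
  (t * x + (1 - t) * y) ^ n <= t * x ^ n + (1 - t) * y ^ n.
Proof.
  intros Hx Hy Ht. induction n as [|n IH]; simpl; [lra|].
  set (z := t * x + (1 - t) * y) in *.
  assert (Hz : 0 <= z) by (unfold z; nra).
  assert (0 <= (x - y) * (x ^ n - y ^ n)).
  { destruct (Rle_dec x y).
    - pose proof (pow_incr x y n ltac:(lra)). nra.
    - pose proof (pow_incr y x n ltac:(lra)). nra. }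
  assert (z * z ^ n <= z * (t * x ^ n + (1 - t) * y ^ n)) by (apply Rmult_le_compat_l; auto).
  assert (z * (t * x ^ n + (1 - t) * y ^ n) - (t * (x * x ^ n) + (1 - t) * (y * y ^ n))
          = - t * (1 - t) * ((x - y) * (x ^ n - y ^ n))) by (unfold z; ring).
  assert (0 <= t * (1 - t)) by nra. nra.
Qed.

Lemma Bs_convex a b x y t : 0 < a <= 1 -> 0 < b <= 1 -> 0 <= x < 1 -> 0 <= y < 1 ->
  0 <= t <= 1 ->
  Bs a b (t * x + (1 - t) * y) <= t * Bs a b x + (1 - t) * Bs a b y.
Proof.
  intros Ha Hb Hx Hy Ht.
  destruct (beta_ex a b x Ha Hb Hx) as [Ex _]. destruct (beta_ex a b y Ha Hb Hy) as [Ey _].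
  unfold Bs. rewrite <- !Series_scal_l, <- Series_plus.
  - apply Series_le.
    + intro n. pose proof (bc_nonneg a b n Ha Hb).
      pose proof (pow_convex x y t n ltac:(lra) ltac:(lra) Ht).
      assert (0 <= t * x + (1 - t) * y) by nra.
      pose proof (pow_le _ n H1). nra.
    + apply (@ex_series_plus R_AbsRing R_NormedModule);
      apply (@ex_series_scal_l R_AbsRing R_NormedModule); auto.
  - apply (@ex_series_scal_l R_AbsRing R_NormedModule); auto.
  - apply (@ex_series_scal_l R_AbsRing R_NormedModule); auto.
Qed.

Lemma Bs_strict a b x y : 0 < a <= 1 -> 0 < b <= 1 -> 0 <= x < 1 -> 0 <= y < 1 ->
  x <> y -> Bs a b ((x + y) / 2) < (Bs a b x + Bs a b y) / 2.
Proof.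
  intros Ha Hb Hx Hy Hxy. set (m := (x + y) / 2).
  assert (Hm : 0 <= m < 1) by (unfold m; lra).
  destruct (beta_ex a b x Ha Hb Hx) as [Ex _]. destruct (beta_ex a b y Ha Hb Hy) as [Ey _].
  destruct (beta_ex a b m Ha Hb Hm) as [Em _].
  set (d := fun n => / 2 * (bc a b n * x ^ n + bc a b n * y ^ n) - bc a b n * m ^ n).
  assert (Ed : ex_series d).
  { apply (@ex_series_minus R_AbsRing R_NormedModule); auto.
    apply (@ex_series_scal_l R_AbsRing R_NormedModule).
    apply (@ex_series_plus R_AbsRing R_NormedModule); auto. }
  assert (HS : Series d = (Bs a b x + Bs a b y) / 2 - Bs a b m).
  { unfold d, Bs. rewrite Series_minus, Series_scal_l, Series_plus; auto.
    - field.
    - apply (@ex_series_scal_l R_AbsRing R_NormedModule).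
      apply (@ex_series_plus R_AbsRing R_NormedModule); auto. }
  assert (Hd : forall n, 0 <= d n).
  { intro n. unfold d. pose proof (bc_nonneg a b n Ha Hb).
    pose proof (pow_convex x y (/2) n ltac:(lra) ltac:(lra) ltac:(lra)).
    replace (/ 2 * x + (1 - / 2) * y) with m in H0 by (unfold m; field).
    assert (0 <= bc a b n * (/2 * x ^ n + (1 - /2) * y ^ n - m ^ n)) by (apply Rmult_le_pos; lra). nra. }
  assert (Hd2 : 0 < d 2%nat).
  { unfold d. pose proof (bc2_pos a b Ha Hb). simpl.
    assert (0 < (x - y) * (x - y)).
    { assert (Hne : x - y <> 0) by lra. apply Rsqr_pos_lt in Hne. unfold Rsqr in Hne; lra. }
    unfold m. nra. }
  rewrite (Series_incr_n d 3) in HS by (lia || auto).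
  simpl Init.Nat.pred in HS. assert (Hsum : sum_f_R0 d 2 = d 0%nat + d 1%nat + d 2%nat) by reflexivity. rewrite Hsum in HS. pose proof (Hd 0%nat). pose proof (Hd 1%nat).
  assert (0 <= Series (fun k => d (3 + k)%nat)).
  { apply Series_nonneg; auto. apply (ex_series_incr_n d 3); auto. }
  lra.
Qed.

Theorem theorem3p5 (a b : R) (ha : 0 < a <= 1) (hb : 0 < b <= 1) :
  let F := fun x => hypergeom a b (a + b) x in
  concave_on (fun x => / F x) 0 1 /\
  (forall x y, 0 < x < 1 -> 0 < y < 1 ->
     F ((x + y) / 2) <= 2 * F x * F y / (F x + F y) /\
     (F ((x + y) / 2) = 2 * F x * F y / (F x + F y) <-> x = y)).
Proof.
  intros F. unfold F; clear F. split.
  - intros x y t Hx Hy Ht. rewrite !Fs_eq.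
    assert (0 <= t * x + (1 - t) * y < 1).
    { assert (0 <= t * x) by nra. assert (0 <= (1 - t) * y) by nra.
      assert (0 <= (1 - t) * (1 - y)) by nra.
      destruct (Req_dec t 0) as [->|Ht0]; [lra|].
      assert (0 < t * (1 - x)) by (apply Rmult_lt_0_compat; lra). nra. }
    rewrite !inv_Fs by (auto; lra).
    pose proof (Bs_convex a b x y t ha hb ltac:(lra) ltac:(lra) Ht). lra.
  - intros x y Hx Hy. rewrite !Fs_eq.
    assert (Hm : 0 <= (x + y) / 2 < 1) by lra.
    pose proof (Fs_ge1 a b x ha hb ltac:(lra)) as F1.
    pose proof (Fs_ge1 a b y ha hb ltac:(lra)) as F2.
    pose proof (Fs_ge1 a b _ ha hb Hm) as F3.
    pose proof (inv_Fs a b x ha hb ltac:(lra)) as I1.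
    pose proof (inv_Fs a b y ha hb ltac:(lra)) as I2.
    pose proof (inv_Fs a b _ ha hb Hm) as I3.
    pose proof (Bs_convex a b x y (/2) ha hb ltac:(lra) ltac:(lra) ltac:(lra)) as C.
    replace (/ 2 * x + (1 - / 2) * y) with ((x + y) / 2) in C by field.
    set (Fx := Fs a b x) in *. set (Fy := Fs a b y) in *. set (Fm := Fs a b ((x + y) / 2)) in *.
    set (Bx := Bs a b x) in *. set (By := Bs a b y) in *. set (Bm := Bs a b ((x + y) / 2)) in *.
    assert (Key : forall w, w = / Fm -> (/ Fx + / Fy) / 2 <= w ->
               Fm <= 2 * Fx * Fy / (Fx + Fy)).
    { intros w Hw Hle. subst w.
      replace (2 * Fx * Fy / (Fx + Fy)) with (/ ((/ Fx + / Fy) / 2)) by (field; lra).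
      rewrite <- (Rinv_inv Fm). apply Rinv_le_contravar; auto.
      assert (0 < / Fx) by (apply Rinv_0_lt_compat; lra).
      assert (0 < / Fy) by (apply Rinv_0_lt_compat; lra). lra. }
    split.
    + apply (Key (/ Fm)); auto. rewrite I1, I2, I3. lra.
    + split.
      * intros Heq. destruct (Req_dec x y) as [|Hne]; auto. exfalso.
        pose proof (Bs_strict a b x y ha hb ltac:(lra) ltac:(lra) Hne) as S. fold Bx By Bm in S.
        assert (/ Fm = (/ Fx + / Fy) / 2).
        { rewrite Heq. field. split; lra. }
        rewrite I1, I2, I3 in H. lra.
      * intros ->. unfold Fm, Fx, Fy in *. replace ((y + y) / 2) with y by field.
        field. lra.
Qed.
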